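(* Let $r\in(0,1]$ be small enough that $\bigcup_{v\in V_r}\Theta^{\rm out}_r(v)\subset\Lambda_r$. Then on the event $\mathcal A_{r,1}$, for every $x\in\Theta^{\rm in}_r(0)\cap\mathcal O$, $$\#W_r(x)\ge r^{-d\{(d-1)/4-2\epsilon\}}.$$
   Context: Frog model setting: $d\ge2$, $r\in(0,1]$, $\omega$ i.i.d. Bernoulli($r$) on $\mathbb{Z}^d$, independent simple random walks $(S^x_k)_{k\ge0}$ with $S^x_0=x$, independent of $\omega$; $\mathcal O:=\{x:\omega(x)=1\}$. $\tau(x,y):=\inf\{k\ge0:S^x_k=y\}$ if $\omega(x)=1$, $:=\infty$ otherwise. For $A\subset\mathbb{Z}^d$, $T_A(x,y):=\inf\{\sum_{i=0}^{m-1}\tau(x_i,x_{i+1}): m\in\mathbb{N},\ x_0,\dots,x_{m-1}\in A,\ x_m\in\mathbb{Z}^d,\ x_0=x,\ x_m=y\}$. Fix $\epsilon:=1/(12d)$. $B_\infty(z,R):=\{y\in\mathbb{R}^d:\|y-z\|_\infty\le R\}$. For $v\in\mathbb{Z}^d$, with $c_r:=7\lceil r^{-(1/2+\epsilon)}\rceil$: $\Theta^{\rm in}_r(v):=B_\infty(c_rv,r^{-(1/2+\epsilon)})\cap\mathbb{Z}^d$, $\Theta_r(v):=B_\infty(c_rv,2r^{-(1/2+\epsilon)})\cap\mathbb{Z}^d$, $\Theta^{\rm out}_r(v):=(B_\infty(c_rv,3r^{-(1/2+\epsilon)})\cap\mathbb{Z}^d)\setminus\Theta_r(v)$. $u\overset{*}{\sim}v$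 means $\|u-v\|_\infty=1$. $\mathcal S_r(v)$ is the event that $\Theta^{\rm in}_r(v)\cap\mathcal O\neq\emptyset$ and for every $x\in\Theta^{\rm in}_r(v)\cap\mathcal O$: (i) for every $u\overset{*}{\sim}v$ there is $a\in\Theta^{\rm in}_r(u)\cap\mathcal O$ with $T_{\Theta_r(v)}(x,a)\le r^{-(1+3\epsilon)}$; (ii) there is $b\in\Theta^{\rm out}_r(v)\cap\mathcal O$ with $T_{\Theta_r(v)}(x,b)\le r^{-(1+3\epsilon)}$. $\Lambda_r:=B_\infty(0,r^{-(d+1)/4})\cap\mathbb{Z}^d$, $V_r:=B_\infty(0,r^{-(d-1)/4+2\epsilon})\cap\mathbb{Z}^d$, $\mathcal A_{r,1}:=\bigcap_{v\in V_r}\mathcal S_r(v)$. For $x\in\Theta^{\rm in}_r(0)$, $W_r(x):=\{w\in\bigcup_{v\in V_r}\Theta^{\rm out}_r(v): T_{\bigcup_{v\in V_r}\Theta_r(v)}(x,w)\le2r^{-(d+1)/2}\}\cap\mathcal O$. *)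

(* Defs.v *)
From Stdlib Require Import Reals Lra Lia ZArith List.
From Stdlib Require Vectors.Fin.
Open Scope R_scope.

Definition pt (d : nat) := Fin.t d -> Z.

(* Configuration: omega : occupation (Bernoulli) variables,
   S x k : position of the walk started at x after k steps. *)

Definition nn_paths {d} (S : pt d -> nat -> pt d) : Prop :=
  forall x, S x 0%nat = x /\
  forall k, exists i, (Z.abs (S x (Datatypes.S k) i - S x k i) = 1)%Z /\
                forall j, j <> i -> S x (Datatypes.S k) j = S x k j.

Definition eps (d : nat) : R := 1 / (12 * INR d).

Definition Zceil_R (x : R) : Z := (- Int_part (- x))%Z.

Definition rho (d : nat) (r : R) : R := Rpower r (- (1/2 + eps d)).

Definition c_r (d : nat) (r : R) : R := 7 * IZR (Zceil_R (rho d r)).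

Definition in_box {d} (r a : R) (v x : pt d) : Prop :=
  forall i, Rabs (IZR (x i) - c_r d r * IZR (v i)) <= a.

Definition Theta_in {d} (r : R) (v x : pt d) : Prop := in_box r (rho d r) v x.
Definition Theta {d} (r : R) (v x : pt d) : Prop := in_box r (2 * rho d r) v x.
Definition Theta_out {d} (r : R) (v x : pt d) : Prop :=
  in_box r (3 * rho d r) v x /\ ~ Theta r v x.

Definition star_adj {d} (u v : pt d) : Prop :=
  (forall i, (Z.abs (u i - v i) <= 1)%Z) /\ exists i, Z.abs (u i - v i) = 1%Z.

Definition tau_is {d} (omega : pt d -> bool) (S : pt d -> nat -> pt d)
  (x y : pt d) (k : nat) : Prop :=
  omega x = true /\ S x k = y /\ forall j, (j < k)%nat -> S x j <> y.

Fixpoint nsum (f : nat -> nat) (m : nat) : nat :=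
  match m with O => O | Datatypes.S m' => (nsum f m' + f m')%nat end.

(* T_A(x,y) <= t.  Since tau is N u {oo}-valued, the infimum defining T_A is
   attained (when finite), so T_A(x,y) <= t iff some admissible chain has
   total time <= t. *)
Definition T_le {d} (omega : pt d -> bool) (S : pt d -> nat -> pt d)
  (A : pt d -> Prop) (x y : pt d) (t : R) : Prop :=
  exists (m : nat) (xs : nat -> pt d) (ks : nat -> nat),
    xs 0%nat = x /\ xs m = y /\
    (forall i, (i < m)%nat -> A (xs i) /\ tau_is omega S (xs i) (xs (Datatypes.S i)) (ks i)) /\
    INR (nsum ks m) <= t.

Definition Lambda {d} (r : R) (x : pt d) : Prop :=
  forall i, Rabs (IZR (x i)) <= Rpower r (- ((INR d + 1) / 4)).

Definition V_r {d} (r : R) (v : pt d) : Prop :=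
  forall i, Rabs (IZR (v i)) <= Rpower r (- ((INR d - 1) / 4) + 2 * eps d).

Definition S_event {d} (omega : pt d -> bool) (S : pt d -> nat -> pt d)
  (r : R) (v : pt d) : Prop :=
  (exists x, Theta_in r v x /\ omega x = true) /\
  forall x, Theta_in r v x -> omega x = true ->
    (forall u, star_adj u v ->
       exists a, Theta_in r u a /\ omega a = true /\
         T_le omega S (Theta r v) x a (Rpower r (- (1 + 3 * eps d)))) /\
    (exists b, Theta_out r v b /\ omega b = true /\
         T_le omega S (Theta r v) x b (Rpower r (- (1 + 3 * eps d)))).

Definition A_r1 {d} (omega : pt d -> bool) (S : pt d -> nat -> pt d) (r : R) : Prop :=
  forall v : pt d, V_r r v -> S_event omega S r v.

Definition W_r {d} (omega : pt d -> bool) (S : pt d -> nat -> pt d)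
  (r : R) (x w : pt d) : Prop :=
  (exists v, V_r r v /\ Theta_out r v w) /\
  T_le omega S (fun y => exists v, V_r r v /\ Theta r v y) x w
       (2 * Rpower r (- ((INR d + 1) / 2))) /\
  omega w = true.

Definition origin (d : nat) : pt d := fun _ => 0%Z.

(* Main.v *)
Require Import Defs.
From Stdlib Require Import Reals List.
From Stdlib Require Import Lra Lia ZArith Classical FunctionalExtensionality.
From Stdlib Require Vectors.Fin.
Open Scope R_scope.

Lemma exp_le_mono (x y : R) : x <= y -> exp x <= exp y.
Proof.
  intro H; destruct (Rle_lt_or_eq_dec x y H) as [h|h].
  - left; apply exp_increasing; exact h.
  - subst; right; reflexivity.
Qed.

Lemma ln_nonpos (r : R) : 0 < r <= 1 -> ln r <= 0.
Proof.
  intros [h1 h2]. destruct (Rle_or_lt (ln r) 0) as [h|h]; auto.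
  exfalso. apply exp_increasing in h. rewrite exp_ln in h by lra.
  rewrite exp_0 in h. lra.
Qed.

Lemma Rpower_anti (r a b : R) : 0 < r <= 1 -> a <= b -> Rpower r b <= Rpower r a.
Proof.
  intros hr hab. unfold Rpower. apply exp_le_mono.
  pose proof (ln_nonpos r hr). nra.
Qed.

Lemma Rpower_pos (r a : R) : 0 < Rpower r a.
Proof. unfold Rpower; apply exp_pos. Qed.

Lemma eps_bounds (d : nat) : (2 <= d)%nat -> 0 < eps d <= 1/24.
Proof.
  intro hd. assert (h2 : 2 <= INR d) by (replace 2 with (INR 2) by (simpl; lra); apply le_INR; exact hd).
  unfold eps. split.
  - apply Rdiv_lt_0_compat; lra.
  - unfold Rdiv. rewrite !Rmult_1_l. apply Rinv_le_contravar; lra.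
Qed.

Lemma nsum_ext (f g : nat -> nat) m :
  (forall i, (i < m)%nat -> f i = g i) -> nsum f m = nsum g m.
Proof.
  induction m; simpl; intros H; auto.
  rewrite IHm by (intros; apply H; lia). rewrite H by lia. reflexivity.
Qed.

Lemma nsum_add (f : nat -> nat) a b :
  nsum f (a + b) = (nsum f a + nsum (fun i => f (a + i)%nat) b)%nat.
Proof.
  induction b; simpl.
  - rewrite Nat.add_0_r; lia.
  - rewrite Nat.add_succ_r. simpl. rewrite IHb. lia.
Qed.

Lemma T_le_concat {d} (omega : pt d -> bool) S (A B C : pt d -> Prop) x y z t1 t2 :
  T_le omega S A x y t1 -> T_le omega S B y z t2 ->
  (forall p, A p -> C p) -> (forall p, B p -> C p) ->
  T_le omega S C x z (t1 + t2).
Proof.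
  intros [m1 [xs1 [ks1 [h10 [h1m [h1i h1t]]]]]] [m2 [xs2 [ks2 [h20 [h2m [h2i h2t]]]]]] hA hB.
  exists (m1 + m2)%nat,
    (fun i => if Nat.leb i m1 then xs1 i else xs2 (i - m1)%nat),
    (fun i => if Nat.ltb i m1 then ks1 i else ks2 (i - m1)%nat).
  assert (key : forall i, (m1 <= i)%nat ->
            (if Nat.leb i m1 then xs1 i else xs2 (i - m1)%nat) = xs2 (i - m1)%nat).
  { intros i hi. destruct (Nat.leb_spec i m1).
    - assert (i = m1) by lia. subst. rewrite Nat.sub_diag. congruence.
    - reflexivity. }
  split; [|split; [|split]].
  - destruct (Nat.leb_spec 0 m1); [exact h10| lia].
  - rewrite key by lia. replace (m1 + m2 - m1)%nat with m2 by lia. exact h2m.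
  - intros i hi. destruct (Nat.ltb_spec i m1).
    + destruct (Nat.leb_spec i m1); [|lia]. destruct (Nat.leb_spec (Datatypes.S i) m1); [|lia].
      destruct (h1i i H) as [ha hb]. split; auto.
    + rewrite key by lia. rewrite key by lia.
      replace (Datatypes.S i - m1)%nat with (Datatypes.S (i - m1)) by lia.
      destruct (h2i (i - m1)%nat) as [ha hb]; [lia|]. split; auto.
  - rewrite nsum_add, plus_INR.
    rewrite (nsum_ext _ ks1 m1) by (intros i hi; destruct (Nat.ltb_spec i m1); [reflexivity|lia]).
    rewrite (nsum_ext _ ks2 m2).
    + lra.
    + intros i hi. destruct (Nat.ltb_spec (m1 + i) m1); [lia|]. f_equal; lia.
Qed.

Lemma T_le_mono {d} (omega : pt d -> bool) S A x y t t' :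
  T_le omega S A x y t -> t <= t' -> T_le omega S A x y t'.
Proof.
  intros [m [xs [ks [h0 [h1 [h2 h3]]]]]] ht. exists m, xs, ks. split; [exact h0|split; [exact h1|split; [exact h2|lra]]].
Qed.

Definition pcons {d} (z : Z) (f : pt d) : pt (Datatypes.S d) :=
  fun i => Fin.caseS' i (fun _ => Z) z f.

Definition zrange (N : nat) : list Z :=
  map (fun k => (Z.of_nat k - Z.of_nat N)%Z) (seq 0 (2 * N + 1)).

Fixpoint enum (N : nat) (d : nat) : list (pt d) :=
  match d with
  | O => (fun _ => 0%Z) :: nil
  | Datatypes.S d' => flat_map (fun z => map (@pcons d' z) (enum N d')) (zrange N)
  end.

Lemma length_flat_map_const {A B} (g : A -> list B) (l : list A) c :
  (forall a, length (g a) = c) -> length (flat_map g l) = (length l * c)%nat.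
Proof.
  intro H; induction l; simpl; auto. rewrite length_app, IHl, H. lia.
Qed.

Lemma enum_length N d : length (enum N d) = Nat.pow (2 * N + 1) d.
Proof.
  induction d; simpl; auto.
  rewrite (length_flat_map_const _ _ (Nat.pow (2 * N + 1) d)).
  - unfold zrange. rewrite length_map, length_seq. replace (N + (N + 0) + 1)%nat with (2 * N + 1)%nat by lia; reflexivity.
  - intros; rewrite length_map; auto.
Qed.

Lemma zrange_bound N z : In z (zrange N) -> (Z.abs z <= Z.of_nat N)%Z.
Proof.
  unfold zrange. intro H. apply in_map_iff in H. destruct H as [k [<- hk]].
  apply in_seq in hk. lia.
Qed.

Lemma enum_bound N d v : In v (enum N d) -> forall i, (Z.abs (v i) <= Z.of_nat N)%Z.
Proof.
  revert v; induction d; intros v hv i.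
  - inversion i.
  - simpl in hv. apply in_flat_map in hv. destruct hv as [z [hz hv]].
    apply in_map_iff in hv. destruct hv as [f [<- hf]].
    apply (Fin.caseS' i (fun i => (Z.abs (pcons z f i) <= Z.of_nat N)%Z)); unfold pcons; simpl.
    + apply zrange_bound; auto.
    + intro p. apply IHd; auto.
Qed.

Lemma NoDup_flat_map_inj {A B} (g : A -> list B) (l : list A) :
  NoDup l -> (forall a, NoDup (g a)) ->
  (forall a a' b, In b (g a) -> In b (g a') -> a = a') -> NoDup (flat_map g l).
Proof.
  intros hl hg hinj. induction hl; simpl. constructor.
  apply NoDup_app; auto. intros b hb hb'. apply in_flat_map in hb'.
  destruct hb' as [a' [ha' hb']]. pose proof (hinj _ _ _ hb hb'). subst. contradiction.
Qed.

Lemma enum_NoDup N d : NoDup (enum N d).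
Proof.
  induction d; simpl.
  - constructor; [simpl; tauto| constructor].
  - apply NoDup_flat_map_inj.
    + unfold zrange. apply NoDup_map_NoDup_ForallPairs; [|apply seq_NoDup].
      intros a b _ _ h. lia.
    + intro z. apply NoDup_map_NoDup_ForallPairs; auto.
      intros f g _ _ h. apply functional_extensionality. intro i.
      exact (f_equal (fun F => F (Fin.FS i)) h).
    + intros a a' b h1 h2. apply in_map_iff in h1, h2.
      destruct h1 as [f [<- _]]. destruct h2 as [g [h _]].
      symmetry; exact (f_equal (fun F => F Fin.F1) h).
Qed.

Lemma build {A B} (Q : A -> B -> Prop) (l : list A) :
  (forall a, In a l -> exists b, Q a b) -> exists l', Forall2 Q l l'.
Proof.
  induction l; intros H.
  - exists nil; constructor.
  - destruct (H a (or_introl eq_refl)) as [b hb].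
    destruct IHl as [l' hl']. { intros; apply H; right; auto. }
    exists (b :: l'); constructor; auto.
Qed.

Lemma Forall2_in_r {A B} (Q : A -> B -> Prop) l l' b :
  Forall2 Q l l' -> In b l' -> exists a, In a l /\ Q a b.
Proof.
  intro H; induction H; simpl; [tauto|]. intros [<-|h].
  - exists x; auto.
  - destruct (IHForall2 h) as [a [ha hq]]; exists a; auto.
Qed.

Lemma Forall2_NoDup {A B} (Q : A -> B -> Prop) l l' :
  Forall2 Q l l' -> NoDup l -> (forall a a' b, Q a b -> Q a' b -> a = a') -> NoDup l'.
Proof.
  intros H; induction H; intros hn hinj; constructor.
  - intro hin. destruct (Forall2_in_r _ _ _ _ H0 hin) as [a [ha hq]].
    inversion hn; subst. pose proof (hinj _ _ _ H hq). subst. contradiction.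
  - inversion hn; auto.
Qed.

Lemma Rabs_le_between (x a : R) : Rabs x <= a -> -a <= x <= a.
Proof. intro h. pose proof (Rle_abs x). pose proof (Rle_abs (-x)). rewrite Rabs_Ropp in *. lra. Qed.

Lemma Zceil_ge x : x <= IZR (Zceil_R x).
Proof.
  unfold Zceil_R. rewrite opp_IZR. destruct (base_Int_part (- x)). lra.
Qed.

Lemma Theta_out_disj {d} r (v v' w : pt d) :
  Theta_out r v w -> Theta_out r v' w -> v = v'.
Proof.
  intros [h1 _] [h2 _]. apply NNPP. intro hne.
  assert (hex : exists i, v i <> v' i).
  { apply NNPP; intro hn. apply hne. apply functional_extensionality. intro i.
    apply NNPP; intro h. apply hn; exists i; auto. }
  destruct hex as [i hi].
  specialize (h1 i); specialize (h2 i).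
  assert (hrho : 0 < rho d r) by (unfold rho; apply Rpower_pos).
  assert (hc : 7 * rho d r <= c_r d r) by (unfold c_r; pose proof (Zceil_ge (rho d r)); lra).
  assert (hD : 1 <= IZR (v i) - IZR (v' i) \/ IZR (v i) - IZR (v' i) <= -1).
  { rewrite <- minus_IZR. destruct (Z.lt_total (v i) (v' i)) as [h|[h|h]].
    - right. apply IZR_le. lia.
    - contradiction.
    - left. apply IZR_le. lia. }
  set (c := c_r d r) in *. set (p := rho d r) in *.
  apply Rabs_le_between in h1. apply Rabs_le_between in h2.
  destruct hD; nra.
Qed.

Theorem lemma3p7 (d : nat) (r : R) (omega : pt d -> bool) (S : pt d -> nat -> pt d) :
  (2 <= d)%nat -> 0 < r <= 1 ->
  (forall v y : pt d, V_r r v -> Theta_out r v y -> Lambda r y) ->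
  nn_paths S ->
  A_r1 omega S r ->
  forall x : pt d, Theta_in r (origin d) x -> omega x = true ->
    exists l : list (pt d),
      NoDup l /\ (forall w, In w l -> W_r omega S r x w) /\
      INR (length l) >= Rpower r (- (INR d * ((INR d - 1) / 4 - 2 * eps d))).
Proof.
  intros hd hr _ _ hA x hx hox.
  set (U := fun y : pt d => exists v, V_r r v /\ Theta r v y).
  set (T := Rpower r (- (1 + 3 * eps d))).
  assert (hT : 0 < T) by apply Rpower_pos.
  assert (reach : forall n (v : pt d), V_r r v -> (forall i, (Z.abs (v i) <= Z.of_nat n)%Z) ->
            exists a, Theta_in r v a /\ omega a = true /\ T_le omega S U x a (INR n * T)).
  { induction n; intros v hv hb.
    - exists x. split; [|split; auto].
      + intro i. specialize (hb i). assert (v i = 0%Z) by lia.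
        specialize (hx i). unfold origin in hx. rewrite H. exact hx.
      + exists O, (fun _ => x), (fun _ => O). simpl. repeat split; auto; try lia. lra.
    - set (v' := fun i => (v i - Z.sgn (v i))%Z).
      assert (hsg : forall i, (Z.sgn (v i) = 0 /\ v i = 0 \/ Z.sgn (v i) = 1 /\ 0 < v i
                              \/ Z.sgn (v i) = -1 /\ v i < 0)%Z).
      { intro i. destruct (Z.lt_total (v i) 0) as [h|[h|h]].
        - right; right; split; auto; apply Z.sgn_neg; auto.
        - left; split; auto; rewrite h; reflexivity.
        - right; left; split; auto; apply Z.sgn_pos; auto. }
      assert (hb' : forall i, (Z.abs (v' i) <= Z.of_nat n)%Z).
      { intro i. unfold v'. specialize (hb i). specialize (hsg i). lia. }
      assert (hv' : V_r r v').
      { intro i. eapply Rle_trans; [|apply (hv i)]. rewrite !Rabs_Zabs. apply IZR_le.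
        unfold v'. specialize (hsg i). lia. }
      destruct (IHn v' hv' hb') as [a' [ha'1 [ha'2 ha'3]]].
      destruct (classic (exists i, v i <> 0%Z)) as [[i0 hi0]|hz].
      + assert (hadj : star_adj v v').
        { split.
          - intro i. unfold v'. specialize (hsg i). lia.
          - exists i0. unfold v'. specialize (hsg i0). lia. }
        destruct (hA v' hv') as [_ hS]. destruct (hS a' ha'1 ha'2) as [hS1 _].
        destruct (hS1 v hadj) as [a [h1 [h2 h3]]].
        exists a. split; auto. split; auto.
        rewrite S_INR. replace ((INR n + 1) * T) with (INR n * T + T) by ring.
        eapply T_le_concat; [exact ha'3|exact h3| auto|].
        intros p hp. exists v'; auto.
      + assert (heq : forall i, v' i = v i).
        { intro i. unfold v'. assert (v i = 0%Z) by (apply NNPP; intro; apply hz; exists i; auto).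
          rewrite H; reflexivity. }
        exists a'. split; [|split; auto].
        * intro i. rewrite <- heq. apply ha'1.
        * eapply T_le_mono; [exact ha'3|]. rewrite S_INR. nra. }
  destruct (eps_bounds d hd) as [he1 he2].
  assert (hd2 : 2 <= INR d) by (replace 2 with (INR 2) by (simpl; lra); apply le_INR; exact hd).
  set (Rv := Rpower r (- ((INR d - 1) / 4) + 2 * eps d)).
  assert (hR1 : 1 <= Rv).
  { unfold Rv. apply Rle_trans with (Rpower r 0); [rewrite Rpower_O by lra; lra|]. apply Rpower_anti; auto. lra. }
  set (N := Z.to_nat (Int_part Rv)).
  destruct (base_Int_part Rv) as [hI1 hI2].
  assert (hIp : (0 <= Int_part Rv)%Z).
  { apply le_IZR. lra. }
  assert (hN : INR N = IZR (Int_part Rv)).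
  { unfold N. rewrite INR_IZR_INZ. rewrite Z2Nat.id; auto. }
  set (Q := fun v w => Theta_out r v w /\ W_r omega S r x w).
  assert (hex : forall v, In v (enum N d) -> exists w, Q v w).
  { intros v hv. pose proof (enum_bound N d v hv) as hb.
    assert (hVv : V_r r v).
    { intro i. rewrite Rabs_Zabs. specialize (hb i). apply IZR_le in hb.
      rewrite <- INR_IZR_INZ in hb. fold Rv. lra. }
    destruct (reach N v hVv hb) as [a [ha1 [ha2 ha3]]].
    destruct (hA v hVv) as [_ hS]. destruct (hS a ha1 ha2) as [_ [b [hb1 [hb2 hb3]]]].
    exists b. split; auto. split; [exists v; auto|split; auto].
    eapply T_le_mono.
    - eapply T_le_concat; [exact ha3|exact hb3|auto|]. intros p hp; exists v; auto.
    -
      assert (hRT : Rv * T <= Rpower r (- ((INR d + 1) / 2))).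
      { unfold Rv, T. rewrite <- Rpower_plus. apply Rpower_anti; auto. lra. }
      fold T. assert (INR N <= Rv) by lra. nra. }
  destruct (build Q (enum N d) hex) as [ws hws].
  exists ws. split; [|split].
  - eapply Forall2_NoDup; [exact hws|apply enum_NoDup|].
    intros a a' b [h1 _] [h2 _]. eapply Theta_out_disj; eauto.
  - intros w hw. destruct (Forall2_in_r _ _ _ _ hws hw) as [v [_ [_ hq]]]. exact hq.
  - rewrite <- (Forall2_length hws), enum_length.
    rewrite pow_INR.
    replace (- (INR d * ((INR d - 1) / 4 - 2 * eps d))) with
        ((- ((INR d - 1) / 4) + 2 * eps d) * INR d) by ring.
    rewrite <- Rpower_mult. fold Rv. rewrite Rpower_pow by lra.
    apply Rle_ge. apply pow_incr. split; [lra|].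
    rewrite plus_INR, mult_INR. simpl (INR 2). simpl (INR 1). lra.
Qed.
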